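(* Let $A\in\mathbb{R}^{N\times N}$, $b^{ex},e\in\mathbb{R}^N$ with $e\neq 0$, and $b=b^{ex}+e$. For each $m$ let $r_m^{ex}=p_m^{ex}(A)b^{ex}$ be the $m$-th residual of GMRES applied to $Ax=b^{ex}$, where $p_m^{ex}$ is the corresponding GMRES residual polynomial (of degree at most $m$, with $p_m^{ex}(0)=1$). Assume there exist $m^*$ and $\eta^*$ such that $\|p_m^{ex}(A)\|\le\eta^*$ for all $m\ge m^*$. Then for every $m\ge m^*$ the $m$-th residual $r_m$ of GMRES applied to $Ax=b$ satisfies \[ \|r_m\|\le\eta\|e\|,\qquad \eta=\frac{\|r_{m^*}^{ex}\|}{\|e\|}+\eta^*. \]
   Context: GMRES with zero initial guess applied to $Ax=b$: the $m$-th iterate $x_m\in\mathcal{K}_m(A,b)=\mathrm{span}\{b,Ab,\dots,A^{m-1}b\}$ minimizes $\|b-Ax\|$ over this subspace, so $r_m=b-Ax_m=p_m(A)b$ with $\|r_m\|=\min\{\|p(A)b\|: p \text{ polynomial of degree}\le m,\ p(0)=1\}$. Norms are Euclidean (spectral for matrices). *)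

(* Defs.v *)
From HB Require Import structures.
From mathcomp Require Import all_boot all_order all_algebra.
From mathcomp Require Import classical_sets reals.
Set Implicit Arguments. Unset Strict Implicit. Unset Printing Implicit Defensive.
Import Order.TTheory GRing.Theory Num.Theory.
Local Open Scope ring_scope.
Local Open Scope classical_set_scope.

Definition vnorm {R : realType} {N : nat} (x : 'cV[R]_N) : R :=
  Num.sqrt (\sum_(i < N) x i ord0 ^+ 2).

Definition specnorm {R : realType} {N : nat} (A : 'M[R]_N) : R :=
  sup [set vnorm (A *m x) | x in [set x : 'cV[R]_N | vnorm x = 1]].

Definition poly_mx {R : realType} {N : nat} (A : 'M[R]_N) (p : {poly R}) : 'M[R]_N :=
  \sum_(i < size p) p`_i *: A ^+ i.

(* p is an m-th GMRES residual polynomial for A x = b (zero initial guess):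
   deg p <= m, p(0) = 1, and ||p(A) b|| is minimal among such polynomials,
   so that r_m = p(A) b is the m-th GMRES residual. *)
Definition gmres_poly {R : realType} {N : nat} (A : 'M[R]_N) (b : 'cV[R]_N)
    (m : nat) (p : {poly R}) : Prop :=
  [/\ (size p <= m.+1)%N, p.[0] = 1 &
      forall q : {poly R}, (size q <= m.+1)%N -> q.[0] = 1 ->
        vnorm (poly_mx A p *m b) <= vnorm (poly_mx A q *m b)].

(* Main.v *)
Require Import Defs.
From HB Require Import structures.
From mathcomp Require Import all_boot all_order all_algebra.
From mathcomp Require Import classical_sets reals.
From mathcomp Require Import ring lra.
Import Order.TTheory GRing.Theory Num.Theory.
Local Open Scope ring_scope.

Section Aux.
Variables (R : realType) (N : nat).
Implicit Types x y : 'cV[R]_N.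

Definition dotv x y : R := \sum_(i < N) x i ord0 * y i ord0.

Lemma vnorm_ge0 x : 0 <= vnorm x.
Proof. exact: sqrtr_ge0. Qed.

Lemma vnorm_sq x : vnorm x ^+ 2 = \sum_(i < N) x i ord0 ^+ 2.
Proof. by rewrite sqr_sqrtr // sumr_ge0 // => i _; rewrite sqr_ge0. Qed.

Lemma entry_le x i : x i ord0 ^+ 2 <= vnorm x ^+ 2.
Proof.
rewrite vnorm_sq (bigD1 i) //= lerDl sumr_ge0 // => j _; exact: sqr_ge0.
Qed.

Lemma CS x y : dotv x y <= vnorm x * vnorm y.
Proof.
set a := vnorm x; set b := vnorm y.
have ha : 0 <= a := vnorm_ge0 x. have hb : 0 <= b := vnorm_ge0 y.
have E : \sum_(i < N) (b * x i ord0 - a * y i ord0) ^+ 2 =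
   b ^+ 2 * a ^+ 2 - 2 * a * b * dotv x y + a ^+ 2 * b ^+ 2.
  transitivity (\sum_(i < N) (b ^+ 2 * x i ord0 ^+ 2 - 2 * a * b * (x i ord0 * y i ord0)
     + a ^+ 2 * y i ord0 ^+ 2)).
    by apply: eq_bigr => i _; ring.
  by rewrite big_split sumrB /= -!mulr_sumr /dotv /a /b !vnorm_sq.
have H : 0 <= \sum_(i < N) (b * x i ord0 - a * y i ord0) ^+ 2.
  by apply: sumr_ge0 => i _; exact: sqr_ge0.
rewrite E in H.
have [ab0|abpos] := eqVneq (a * b) 0.
  have : (a == 0) || (b == 0) by rewrite -mulf_eq0 ab0.
  case/orP => /eqP z.
    have -> : dotv x y = 0.
      rewrite /dotv big1 // => i _.
      have := entry_le x i; rewrite -/a z expr0n /= => h.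
      have : x i ord0 ^+ 2 == 0 by rewrite eq_le h sqr_ge0.
      by rewrite sqrf_eq0 => /eqP ->; rewrite mul0r.
    by rewrite z mul0r.
  have -> : dotv x y = 0.
    rewrite /dotv big1 // => i _.
    have := entry_le y i; rewrite -/b z expr0n /= => h.
    have : y i ord0 ^+ 2 == 0 by rewrite eq_le h sqr_ge0.
    by rewrite sqrf_eq0 => /eqP ->; rewrite mulr0.
  by rewrite z mulr0.
have abp : 0 < a * b by rewrite lt_def abpos mulr_ge0.
have : (a * b) * dotv x y <= (a * b) * (a * b) by nra.
by rewrite ler_pM2l.
Qed.

Lemma vnorm_triangle x y : vnorm (x + y) <= vnorm x + vnorm y.
Proof.
have ha := vnorm_ge0 x; have hb := vnorm_ge0 y.
rewrite -(ger0_norm (addr_ge0 ha hb)) -sqrtr_sqr /vnorm ler_sqrt ?sqr_ge0 //.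
have C := CS x y.
have -> : \sum_(i < N) (x + y) i ord0 ^+ 2 =
  \sum_(i < N) x i ord0 ^+ 2 + 2 * dotv x y + \sum_(i < N) y i ord0 ^+ 2.
  rewrite /dotv mulr_sumr -!big_split /=; apply: eq_bigr => i _.
  rewrite mxE; ring.
rewrite -!vnorm_sq !sqrtr_sqr !ger0_norm //; nra.
Qed.

Lemma vnormZ (c : R) x : vnorm (c *: x) = `|c| * vnorm x.
Proof.
rewrite /vnorm -sqrtr_sqr -sqrtrM ?sqr_ge0 // mulr_sumr.
by congr Num.sqrt; apply: eq_bigr => i _; rewrite mxE exprMn.
Qed.

Lemma vnorm_eq0 x : vnorm x = 0 -> x = 0.
Proof.
move=> h; apply/matrixP => i j; rewrite (ord1 j) mxE.
have := entry_le x i; rewrite h expr0n /= => h2.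
have : x i ord0 ^+ 2 == 0 by rewrite eq_le h2 sqr_ge0.
by rewrite sqrf_eq0 => /eqP.
Qed.

Lemma spec_bound (P : 'M[R]_N) x : vnorm (P *m x) <= specnorm P * vnorm x.
Proof.
have [x0|xn0] := eqVneq (vnorm x) 0.
  by rewrite x0 (vnorm_eq0 _ x0) mulmx0 mulr0 /vnorm big1 ?sqrtr0 // => i _; rewrite mxE expr0n.
have xp : 0 < vnorm x by rewrite lt_def xn0 vnorm_ge0.
set u := (vnorm x)^-1 *: x.
have hu : vnorm u = 1 by rewrite vnormZ ger0_norm ?invr_ge0 ?vnorm_ge0 // mulVf.
have ub : vnorm (P *m u) <= specnorm P.
  apply: sup_upper_bound; last by exists u.
  split; first by exists (vnorm (P *m u)), u.
  exists (Num.sqrt (\sum_(i < N) (\sum_(j < N) `|P i j|) ^+ 2)).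
  move=> r [z hz <-]; rewrite /vnorm ler_sqrt; last first.
    by apply: sumr_ge0 => i _; exact: sqr_ge0.
  apply: ler_sum => i _.
  have hrow : `|(P *m z) i ord0| <= \sum_(j < N) `|P i j|.
    rewrite mxE; apply: le_trans (ler_norm_sum _ _ _) _.
    apply: ler_sum => j _; rewrite normrM.
    have hz1 : `|z j ord0| <= 1.
      have := entry_le z j; rewrite hz expr1n -real_normK ?num_real // => hh.
      by rewrite -ler_sqr ?nnegrE // expr1n.
    by rewrite -{2}(mulr1 `|P i j|) ler_wpM2l.
  rewrite -real_normK ?num_real // ler_sqr ?nnegrE //.
  by apply: sumr_ge0 => j _.
have -> : vnorm (P *m x) = vnorm x * vnorm (P *m u).
  by rewrite /u -scalemxAr vnormZ ger0_norm ?invr_ge0 ?vnorm_ge0 // mulrA mulfV // mul1r.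
by rewrite [specnorm P * _]mulrC ler_pM2l.
Qed.

End Aux.

Theorem proposition1 (R : realType) (N : nat) (A : 'M[R]_N)
    (bex e : 'cV[R]_N) (pex : nat -> {poly R}) (mstar : nat) (etastar : R) :
  e != 0 ->
  (forall m, gmres_poly A bex m (pex m)) ->
  (forall m, (mstar <= m)%N -> specnorm (poly_mx A (pex m)) <= etastar) ->
  forall m, (mstar <= m)%N ->
  forall p : {poly R}, gmres_poly A (bex + e) m p ->
  vnorm (poly_mx A p *m (bex + e)) <=
    (vnorm (poly_mx A (pex mstar) *m bex) / vnorm e + etastar) * vnorm e.
Proof.
move=> en0 hex heta m hm p [_ _ hp].
have [sz0 p00 _] := hex m.
have [szs p0s _] := hex mstar.
have [_ _ hmin] := hex m.
have ep : 0 < vnorm e.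
  rewrite lt_def vnorm_ge0 andbT; apply/eqP => /vnorm_eq0 h; by rewrite h eqxx in en0.
apply: (le_trans (hp _ sz0 p00)).
rewrite mulmxDr; apply: (le_trans (vnorm_triangle _ _ _ _)).
have h1 : vnorm (poly_mx A (pex m) *m bex) <= vnorm (poly_mx A (pex mstar) *m bex).
  apply: hmin => //; apply: leq_trans szs _; by rewrite ltnS.
have h2 := @spec_bound R N (poly_mx A (pex m)) e.
have h3 := heta m hm.
rewrite mulrDl divfK; last by rewrite gt_eqF.
have h4 : specnorm (poly_mx A (pex m)) * vnorm e <= etastar * vnorm e.
  by rewrite ler_pM2r.
lra.
Qed.
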